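(* Let $\kappa\ge2$. Every $P\in\mathcal{DS}^\kappa_{2,m}$ can be written as $$P(j^\kappa f)=\sum_{-\frac{\kappa-1}{\kappa}m\le a\le m}(f_1')^a\,\mathcal P_a\big(f_2',\Lambda^3,\Lambda^5_1,\Lambda^7_{1,1},\Lambda^9_{1,1,1},\dots,\Lambda^{2\kappa-1}_{1,\dots,1}\big),$$ with $a$ ranging over integers and polynomials $\mathcal P_a$ weighted homogeneous of weight $m-a$ (the argument $f_2'$ having weight 1 and $\Lambda^{2\lambda-1}_{1,\dots,1}$ weight $2\lambda-1$). Conversely, every rational expression of this form which is a polynomial in $j^\kappa f$ belongs to $\mathcal{DS}^\kappa_{2,m}$.
   Context: Dimension 2. $f_i^{(\lambda)}$ ($i\in\{1,2\}$, $\lambda\ge1$) are independent indeterminates (derivatives of a germ $f=(f_1,f_2):(\mathbb C,0)\to\mathbb C^2$), $j^\kappa f=(f_1^{(\lambda)},f_2^{(\lambda)})_{\lambda\le\kappa}$. A polynomial $P(j^\kappa f)$ is invariant by reparametrization of weight $m$ if $P(j^\kappa(f\circ\phi))=(\phi')^mP((j^\kappa f)\circ\phi)$ for all holomorphic germs $f$ and local biholomorphisms $\phi$ of $\mathbb C$; these form $\mathcal{DS}^\kappa_{2,m}$. $D=\sum_{i,\lambda}f_i^{(\lambda+1)}\partial/\partial f_i^{(\lambda)}$; for $P,Q$ of weights $m,n$, $[P,Q]:=n\,DP\cdot Q-m\,P\cdot DQ$ (weight $m+n+1$). $\Lambda^3:=f_1'f_2''-f_1''f_2'$ (weight 3), and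 recursively $\Lambda^{2\lambda-1}_{1,\dots,1}:=[\Lambda^{2\lambda-3}_{1,\dots,1},f_1']$ for $3\le\lambda\le\kappa$ (with $\lambda-2$ lower indices; so $\Lambda^5_1=[\Lambda^3,f_1']$, $\Lambda^7_{1,1}=[\Lambda^5_1,f_1']$, etc.). *)

(* Defs.v *)
From HB Require Import structures.
From mathcomp Require Import all_boot all_order all_algebra.
Set Implicit Arguments. Unset Strict Implicit. Unset Printing Implicit Defensive.
Import Order.TTheory GRing.Theory Num.Theory.
Local Open Scope ring_scope.

Inductive mexpr (V C : Type) : Type :=
  | MVar of V
  | MCst of C
  | MAdd of mexpr V C & mexpr V C
  | MMul of mexpr V C & mexpr V C.
Arguments MVar {V C}.
Arguments MCst {V C}.
Arguments MAdd {V C}.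
Arguments MMul {V C}.

Fixpoint meval (V C : Type) (R : comNzRingType) (c : C -> R) (env : V -> R)
    (e : mexpr V C) : R :=
  match e with
  | MVar v => env v
  | MCst a => c a
  | MAdd p q => meval c env p + meval c env q
  | MMul p q => meval c env p * meval c env q
  end.

(* Jet variables: (i, k) stands for f_{i+1}^{(k+1)}, i in {0,1}. *)
Definition JV := ('I_2 * nat)%type.

(* P only involves f_i^{(lambda)} with lambda <= kappa, i.e. P is a
   polynomial in j^kappa f. *)
Fixpoint jet_order_le (C : Type) (kappa : nat) (e : mexpr JV C) : bool :=
  match e with
  | MVar v => (v.2 < kappa)%N
  | MCst _ => true
  | MAdd p q => jet_order_le kappa p && jet_order_le kappa q
  | MMul p q => jet_order_le kappa p && jet_order_le kappa q
  end.

Section Jets.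
Variable C : numClosedFieldType.

(* j^kappa of a (polynomial) map f = (f_1, f_2), as a valuation of jet
   variables in {poly C}: f_i^{(k+1)}. Variables beyond the order used are
   harmless since P only uses orders <= kappa. *)
Definition jet_env (f : 'I_2 -> {poly C}) : JV -> {poly C} :=
  fun v => (f v.1)^`(v.2.+1).

Definition jet_env_comp (f : 'I_2 -> {poly C}) (phi : {poly C}) : JV -> {poly C} :=
  fun v => (f v.1)^`(v.2.+1) \Po phi.

Definition invariant_reparam (m : nat) (P : mexpr JV C) : Prop :=
  forall (f : 'I_2 -> {poly C}) (phi : {poly C}),
    phi^`() != 0 ->
    meval (@polyC C) (jet_env (fun i => f i \Po phi)) P
    = phi^`() ^+ m * meval (@polyC C) (jet_env_comp f phi) P.

Definition DS (kappa m : nat) (P : mexpr JV C) : Prop :=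
  jet_order_le kappa P /\ invariant_reparam m P.

(* The total derivative D = sum f_i^{(l+1)} d/d f_i^{(l)} on expressions. *)
Fixpoint Dexpr (e : mexpr JV C) : mexpr JV C :=
  match e with
  | MVar v => MVar (v.1, v.2.+1)
  | MCst _ => MCst 0
  | MAdd p q => MAdd (Dexpr p) (Dexpr q)
  | MMul p q => MAdd (MMul p (Dexpr q)) (MMul (Dexpr p) q)
  end.

Definition bracket (m n : nat) (P Q : mexpr JV C) : mexpr JV C :=
  MAdd (MMul (MCst (n%:R)) (MMul (Dexpr P) Q))
       (MMul (MCst (- (m%:R))) (MMul P (Dexpr Q))).

Definition f1' : mexpr JV C := MVar (0%R : 'I_2, 0%N).
Definition f1'' : mexpr JV C := MVar (0%R : 'I_2, 1%N).
Definition f2' : mexpr JV C := MVar (1%R : 'I_2, 0%N).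
Definition f2'' : mexpr JV C := MVar (1%R : 'I_2, 1%N).

(* Lam j = Lambda^{2(j+2)-1}_{1,...,1} (weight 2j+3):
   Lam 0 = Lambda^3, Lam (j+1) = [Lam j, f1']. *)
Fixpoint Lam (j : nat) : mexpr JV C :=
  match j with
  | 0 => MAdd (MMul f1' f2'') (MMul (MCst (-1)) (MMul f1'' f2'))
  | j'.+1 => bracket (2 * j' + 3) 1 (Lam j') f1'
  end.

(* Arguments of the P_a: variable 0 -> f2' (weight 1),
   variable j+1 -> Lam j (weight 2j+3) for j+1 < kappa. *)
Definition arg_weight (kappa : nat) (j : 'I_kappa) : nat :=
  if (j : nat) == 0%N then 1%N else (2 * j + 1)%N.

Definition arg_env (kappa : nat) (x : JV -> C) (j : 'I_kappa) : C :=
  if (j : nat) == 0%N then meval id x f2' else meval id x (Lam (j.-1)).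

(* Weighted homogeneity of weight d (semantic, over the infinite field C). *)
Definition weighted_homog (V : Type) (w : V -> nat) (d : int) (Q : mexpr V C) : Prop :=
  forall (t : C) (y : V -> C),
    meval id (fun v => t ^+ w v * y v) Q = t ^ d * meval id y Q.

Definition a_range (kappa m : nat) : seq int :=
  [seq a <- [seq (k%:Z - ((kappa.-1 * m)%N)%:Z) | k <- iota 0 (kappa * m).+1]
   | (- ((kappa.-1 * m)%N)%:Z <= kappa%:Z * a)%R && (a <= m%:Z)%R].

Definition lam_sum (kappa m : nat) (Pa : int -> mexpr 'I_kappa C) (x : JV -> C) : C :=
  \sum_(a <- a_range kappa m) (meval id x f1') ^ a * meval id (@arg_env kappa x) (Pa a).

End Jets.

(* Main.v *)
Require Import Defs.
From HB Require Import structures.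
From mathcomp Require Import all_boot all_order all_algebra.
From Stdlib Require Import Lia.
Set Implicit Arguments. Unset Strict Implicit. Unset Printing Implicit Defensive.
Import Order.TTheory GRing.Theory Num.Theory.
Local Open Scope ring_scope.

Lemma meval_horner (V : Type) (K : comNzRingType) (env : V -> {poly K}) (e : mexpr V K) (x : K) :
  (meval (@polyC K) env e).[x] = meval id (fun v => (env v).[x]) e.
Proof.
elim: e => [v|c|p IHp q IHq|p IHp q IHq] //=; first by rewrite hornerC.
  by rewrite hornerD IHp IHq.
by rewrite hornerM IHp IHq.
Qed.

Lemma meval_comp (V : Type) (K : comNzRingType) (env : V -> {poly K}) (e : mexpr V K) (q : {poly K}) :
  (meval (@polyC K) env e) \Po q = meval (@polyC K) (fun v => env v \Po q) e.
Proof.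
elim: e => [v|c|p IHp q' IHq|p IHp q' IHq] //=; first by rewrite comp_polyC.
  by rewrite comp_polyD IHp IHq.
by rewrite comp_polyM IHp IHq.
Qed.

Lemma meval_ext (C0 : Type) (R : comNzRingType) (c : C0 -> R) (k : nat) (env1 env2 : JV -> R)
  (e : mexpr JV C0) :
  jet_order_le k e -> (forall v : JV, (v.2 < k)%N -> env1 v = env2 v) ->
  meval c env1 e = meval c env2 e.
Proof.
move=> He Henv; elim: e He => [v|a|p IHp q IHq|p IHp q IHq] //=.
- by move=> /Henv.
- by move=> /andP[/IHp -> /IHq ->].
- by move=> /andP[/IHp -> /IHq ->].
Qed.

Lemma meval_eq (V C0 : Type) (R : comNzRingType) (c : C0 -> R) (env1 env2 : V -> R) (e : mexpr V C0) :
  (forall v, env1 v = env2 v) -> meval c env1 e = meval c env2 e.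
Proof.
move=> H; elim: e => [v|a|p IHp q IHq|p IHp q IHq] //=; by rewrite ?IHp ?IHq.
Qed.

Lemma jet_order_mono (C0 : Type) (k l : nat) (e : mexpr JV C0) :
  (k <= l)%N -> jet_order_le k e -> jet_order_le l e.
Proof.
move=> kl; elim: e => [v|a|p IHp q IHq|p IHp q IHq] //=.
- by move=> h; apply: leq_trans kl.
- by move=> /andP[/IHp -> /IHq ->].
- by move=> /andP[/IHp -> /IHq ->].
Qed.

Lemma cross_alg (R : comNzRingType) (m n : nat) (a b P Q : R) :
  n%:R * ((b * a ^+ m.-1 *+ m * P) * (a ^+ n * Q)) =
  m%:R * ((a ^+ m * P) * (b * a ^+ n.-1 *+ n * Q)).
Proof.
case: m => [|m].
  by rewrite mulr0n mul0r mul0r mul0r mulr0.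
case: n => [|n].
  by rewrite mulr0n [_ *+ 0]mulr0n mul0r mul0r mulr0 mulr0.
rewrite /= !mulr_natl !(mulrnAl, mulrnAr) mulrnAC; congr (_ *+ _ *+ _).
rewrite !exprS !mulrA.
by rewrite [LHS](ACl (4*2*3*1*5*6)).
Qed.

Lemma main_alg (R : comNzRingType) (m : nat) (a P1 Q : R) (n : nat) :
  a ^+ m * (P1 * a) * (a ^+ n * Q) = a ^+ (m + n + 1) * (P1 * Q).
Proof.
rewrite exprD exprD expr1 !mulrA.
by rewrite [LHS](ACl (1*4*3*2*5)).
Qed.

Lemma bracket_alg (R : comNzRingType) (m n : nat) (a b P P1 Q Q1 : R) :
  n%:R * ((b * a ^+ m.-1 *+ m * P + a ^+ m * (P1 * a)) * (a ^+ n * Q)) +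
  - m%:R * ((a ^+ m * P) * (b * a ^+ n.-1 *+ n * Q + a ^+ n * (Q1 * a)))
  = a ^+ (m + n + 1) * (n%:R * (P1 * Q) + - m%:R * (P * Q1)).
Proof.
rewrite mulrDl mulrDr mulrDr mulrDr cross_alg main_alg.
have -> : a ^+ m * P * (a ^+ n * (Q1 * a)) = a ^+ (m + n + 1) * (P * Q1).
  rewrite !exprD expr1 !mulrA.
  by rewrite [LHS](ACl (1*3*5*2*4)).
rewrite mulNr mulNr addrACA subrr add0r mulrDr; congr (_ + _).
  by rewrite [LHS]mulrCA.
by rewrite mulNr mulrN [in RHS]mulrCA.
Qed.

Section S.
Variable C : numClosedFieldType.

Definition sinv (w : nat) (F : ('I_2 -> {poly C}) -> {poly C}) :=
  forall (f : 'I_2 -> {poly C}) (phi : {poly C}), phi^`() != 0 ->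
    F (fun i => f i \Po phi) = phi^`() ^+ w * (F f \Po phi).

Lemma sbracket m n p q : sinv m p -> sinv n q ->
  sinv (m + n + 1) (fun f => (n%:R)%:P * ((p f)^`() * q f) + (- m%:R)%:P * (p f * (q f)^`())).
Proof.
move=> Hp Hq f phi Hphi /=.
rewrite (Hp f phi Hphi) (Hq f phi Hphi) !derivM !deriv_exp !deriv_comp.
rewrite comp_polyD !comp_polyM !comp_polyC polyCN !polyC_natr.
exact: bracket_alg.
Qed.


Definition M (e : mexpr JV C) (f : 'I_2 -> {poly C}) : {poly C} :=
  meval (@polyC C) (jet_env f) e.

Lemma M_D e f : M (Dexpr e) f = (M e f)^`().
Proof.
rewrite /M; elim: e => [v|c|p IHp q IHq|p IHp q IHq] /=.
- by [].
- by rewrite derivC polyC0.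
- by rewrite IHp IHq derivD.
- by rewrite IHp IHq derivM addrC.
Qed.

Lemma M_comp e f phi : M e f \Po phi = meval (@polyC C) (jet_env_comp f phi) e.
Proof. by rewrite /M meval_comp. Qed.

Lemma sinv_ext w F G : (forall f, F f = G f) -> sinv w F -> sinv w G.
Proof. by move=> FG HF f phi Hphi; rewrite -!FG HF. Qed.

Lemma sinv_opp w F : sinv w F -> sinv w (fun f => - F f).
Proof. by move=> HF f phi Hphi; rewrite HF // (raddfN (comp_poly phi)) mulrN. Qed.

Lemma sinv_var i : sinv 1 (M (MVar (i, 0%N))).
Proof.
move=> f phi Hphi; rewrite /M /jet_env /= expr1.
by rewrite deriv_comp mulrC.
Qed.

Lemma sinv_Lam j : sinv (2 * j + 3) (M (Lam C j)).
Proof.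
elim: j => [|j IH].
  have H := sbracket (sinv_var 0) (sinv_var 1).
  apply: (sinv_ext _ (sinv_opp H)) => f.
  rewrite /M /= -!/(M _ f) polyC1 !mul1r /jet_env /=.
  by rewrite polyCN polyC1 !mulN1r opprD opprK addrC.
have H := sbracket IH (sinv_var 0).
have e : (2 * j + 3 + 1 + 1 = 2 * j.+1 + 3)%N.
  by rewrite mulnS [(2 + _)%N]addnC -!addnA.
rewrite -e; apply: (sinv_ext _ H) => f.
rewrite /M /= -!/(M _ f) -M_D.
by [].
Qed.

Lemma jet_order_D k e : jet_order_le k e -> jet_order_le k.+1 (@Dexpr C e).
Proof.
elim: e => [v|a|p IHp q IHq|p IHp q IHq] //=.
- by move=> /andP[/IHp -> /IHq ->].
- move=> /andP[hp hq].
  by rewrite (IHp hp) (IHq hq) (jet_order_mono (leqnSn _) hp) (jet_order_mono (leqnSn _) hq).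
Qed.

Lemma Lam_order j : jet_order_le j.+2 (Lam C j).
Proof.
elim: j => [|j IH] //=.
rewrite (jet_order_D IH) (jet_order_mono (leqnSn _) IH) /=.
by [].
Qed.

Lemma M_Lam_norm j f : f 0 = 'X -> M (Lam C j) f = (f 1)^`(j.+2).
Proof.
move=> f0; elim: j => [|j IH].
  rewrite /M /= /jet_env /= f0 derivX derivC.
  by rewrite mul1r mul0r mulr0 addr0.
rewrite /M /= -!/(M _ f) M_D IH /jet_env /= f0 derivX derivC.
by rewrite polyC1 mul1r mulr1 mulr0 mulr0 addr0.
Qed.

Lemma invr_var (m : nat) (P : mexpr JV C) : invariant_reparam m P -> sinv m (M P).
Proof. by move=> H f phi Hphi; rewrite /M H // -M_comp. Qed.

Lemma fact_neq0 n : (n`!%:R : C) != 0.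
Proof. by rewrite pnatr_eq0 -lt0n fact_gt0. Qed.

Lemma jet0 (p : {poly C}) n : (p^`(n)).[0] = p`_n * n`!%:R.
Proof. by rewrite horner_coef0 coef_derivn addn0 ffactnn mulr_natr. Qed.

Lemma coef_comp_scale (p : {poly C}) (c : C) n : (p \Po (c *: 'X))`_n = c ^+ n * p`_n.
Proof.
elim/poly_ind: p n => [|p a IH] n; first by rewrite comp_poly0 coef0 mulr0.
rewrite comp_poly_MXaddC -scalerAr coefD coefZ coefMX coefD coefMX !coefC.
case: n => [|n] /=; first by rewrite mulr0 !add0r expr0 mul1r.
by rewrite !addr0 (IH n) exprS mulrA.
Qed.

Lemma poly_eq0_all (p : {poly C}) : (forall t, p.[t] = 0) -> p = 0.
Proof.
move=> H; apply/eqP; apply: contraT => Hp.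
have := @max_poly_roots _ p [seq i%:R | i <- iota 0 (size p)] Hp.
rewrite size_map size_iota ltnn; apply.
  by apply/allP => x _; rewrite /root H.
rewrite map_inj_uniq ?iota_uniq //.
by move=> i j /eqP; rewrite eqr_nat => /eqP.
Qed.

Lemma poly_eq0_off (p q : {poly C}) : q != 0 -> (forall t, q.[t] != 0 -> p.[t] = 0) -> p = 0.
Proof.
move=> Hq H.
have : p * q = 0.
  apply: poly_eq0_all => t; rewrite hornerM.
  by have [->|/H ->] := eqVneq q.[t] 0; rewrite ?mulr0 ?mul0r.
by move/eqP; rewrite mulf_eq0 (negbTE Hq) orbF => /eqP.
Qed.

Lemma coef_phi_pow (psi : {poly C}) n i :
  (('X * psi) ^+ n)`_i = if (i < n)%N then 0 else (psi ^+ n)`_(i - n).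
Proof. by rewrite exprMn coefXnM. Qed.

Lemma coef0_exp (psi : {poly C}) n : (psi ^+ n)`_0 = psi`_0 ^+ n.
Proof. by rewrite -!horner_coef0 horner_exp. Qed.

Lemma trunc_inv (psi h : {poly C}) N : psi`_0 != 0 ->
  exists g : {poly C}, forall i, (i <= N)%N -> (g \Po ('X * psi))`_i = h`_i.
Proof.
move=> Hu; elim: N => [|N [g Hg]].
  exists (h`_0)%:P => i; rewrite leqn0 => /eqP ->.
  by rewrite comp_polyC coefC.
set c := (h`_N.+1 - (g \Po ('X * psi))`_N.+1) / psi`_0 ^+ N.+1.
exists (g + c *: 'X^(N.+1)) => i Hi.
rewrite comp_polyD comp_polyZ comp_Xn_poly coefD coefZ coef_phi_pow.
case: ltnP => Hin.
  by rewrite mulr0 addr0 Hg // -ltnS.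
have -> : i = N.+1 by apply/eqP; rewrite eqn_leq Hi Hin.
rewrite subnn coef0_exp /c divfK ?expf_neq0 //.
by rewrite addrC subrK.
Qed.

Lemma ord2_neq0 (i : 'I_2) : i != 0 -> i = 1.
Proof. by case: i => [[|[|n]]] //= Hi _; apply/val_inj. Qed.

Definition rpoly (kappa : nat) (s : nat -> C) : {poly C} :=
  \poly_(k < kappa) (s k / (k.+1)`!%:R).

Lemma coef_Xrpoly kappa s k : (k < kappa)%N ->
  ('X * rpoly kappa s)`_k.+1 = s k / (k.+1)`!%:R.
Proof. by move=> Hk; rewrite coefXM /= coef_poly Hk. Qed.

Lemma jet_of_coef (p : {poly C}) k a : p`_k.+1 = a / (k.+1)`!%:R -> (p^`(k.+1)).[0] = a.
Proof. by move=> H; rewrite jet0 H divfK // fact_neq0. Qed.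

Definition gnorm (g2 : {poly C}) : 'I_2 -> {poly C} := fun i => if i == 0 then 'X else g2.

Lemma normalize kappa (x : JV -> C) : (0 < kappa)%N -> x (0, 0%N) != 0 ->
  exists g2 phi : {poly C},
  [/\ phi.[0] = 0, (phi^`()).[0] = x (0, 0%N), phi^`() != 0 &
   forall v : JV, (v.2 < kappa)%N -> (jet_env (fun i => gnorm g2 i \Po phi) v).[0] = x v].
Proof.
move=> Hk Hu.
set psi := rpoly kappa (fun k => x (0, k)).
have psi0 : psi`_0 = x (0, 0%N) by rewrite coef_poly Hk /= divr1.
set h := 'X * rpoly kappa (fun k => x (1, k)).
have [g2 Hg2] := trunc_inv h kappa (eq_ind_r (fun a => a != 0) Hu psi0).
exists g2, ('X * psi).
have d0 : (('X * psi)^`()).[0] = x (0, 0%N).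
  by rewrite derivM derivX mul1r hornerD hornerM hornerX mul0r addr0 horner_coef0.
split => //.
- by rewrite hornerM hornerX mul0r.
- by apply: contraNneq Hu => e; rewrite -d0 e horner0.
case=> i k /= Hik; rewrite /jet_env /=.
apply: jet_of_coef; have [->|/ord2_neq0 ->] := eqVneq i 0.
  by rewrite /gnorm eqxx comp_polyX coefXM /= coef_poly Hik.
rewrite /gnorm /= Hg2 // /h coef_Xrpoly //.
Qed.

Lemma eval_norm kappa (x : JV -> C) g2 phi e w :
  phi.[0] = 0 -> (phi^`()).[0] = x (0, 0%N) -> phi^`() != 0 ->
  (forall v : JV, (v.2 < kappa)%N -> (jet_env (fun i => gnorm g2 i \Po phi) v).[0] = x v) ->
  jet_order_le kappa e -> sinv w (M e) ->
  meval id x e = x (0, 0%N) ^+ w * meval id (fun v => (jet_env (gnorm g2) v).[0]) e.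
Proof.
move=> p0 d0 dn0 Hj He Hinv.
rewrite -(meval_ext id He Hj) -meval_horner.
have := Hinv (gnorm g2) phi dn0; rewrite /M => ->.
by rewrite hornerM horner_exp d0 horner_comp p0 meval_horner.
Qed.

Fixpoint hom (V : Type) (w : V -> nat) (e : mexpr V C) (d : nat) : mexpr V C :=
  match e with
  | MVar v => if w v == d then MVar v else MCst 0
  | MCst c => if d == 0%N then MCst c else MCst 0
  | MAdd p q => MAdd (hom w p d) (hom w q d)
  | MMul p q => \big[MAdd/MCst 0]_(i < d.+1) MMul (hom w p i) (hom w q (d - i))
  end.

Lemma meval_big (V : Type) (R : comNzRingType) (c : C -> R) (env : V -> R) n (F : 'I_n -> mexpr V C) :
  c 0 = 0 -> meval c env (\big[MAdd/MCst 0]_(i < n) F i) = \sum_(i < n) meval c env (F i).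
Proof. by move=> c0; apply: (big_morph (meval c env)) => //. Qed.

Definition wenv (V : Type) (w : V -> nat) (y : V -> C) : V -> {poly C} :=
  fun v => y v *: 'X^(w v).

Lemma coef_hom (V : Type) (w : V -> nat) (y : V -> C) e d :
  (meval (@polyC C) (wenv w y) e)`_d = meval id y (hom w e d).
Proof.
elim: e d => [v|c|p IHp q IHq|p IHp q IHq] d /=.
- rewrite /wenv coefZ coefXn eq_sym; case: eqP => _ /=; first by rewrite mulr1.
  by rewrite mulr0.
- by rewrite coefC; case: eqP.
- by rewrite coefD IHp IHq.
- by rewrite coefM meval_big //; apply: eq_bigr => i _; rewrite IHp IHq.
Qed.

Lemma homog_hom (V : Type) (w : V -> nat) (y : V -> C) (t : C) e d :
  meval id (fun v => t ^+ w v * y v) (hom w e d) = t ^+ d * meval id y (hom w e d).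
Proof.
elim: e d => [v|c|p IHp q IHq|p IHp q IHq] d /=.
- by case: eqP => [<-|] //= _; rewrite mulr0.
- by case: eqP => [->|_] /=; rewrite ?expr0 ?mul1r ?mulr0.
- by rewrite IHp IHq mulrDr.
- rewrite !meval_big // mulr_sumr; apply: eq_bigr => i _ /=.
  rewrite IHp IHq mulrACA -exprD subnKC //.
  by rewrite -ltnS.
Qed.

Lemma sum_hom (V : Type) (w : V -> nat) (y : V -> C) e N :
  (size (meval (@polyC C) (wenv w y) e) <= N)%N ->
  meval id y e = \sum_(d < N) meval id y (hom w e d).
Proof.
move=> HN.
have -> : meval id y e = (meval (@polyC C) (wenv w y) e).[1].
  rewrite meval_horner; apply: meval_eq => v.
  by rewrite /wenv hornerZ hornerXn expr1n mulr1.
rewrite (horner_coef_wide _ HN); apply: eq_bigr => i _.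
by rewrite expr1n mulr1 coef_hom.
Qed.

Fixpoint mmap (V W : Type) (sb : V -> mexpr W C) (e : mexpr V C) : mexpr W C :=
  match e with
  | MVar v => sb v
  | MCst c => MCst c
  | MAdd p q => MAdd (mmap sb p) (mmap sb q)
  | MMul p q => MMul (mmap sb p) (mmap sb q)
  end.

Lemma meval_mmap (V W : Type) (R : comNzRingType) (c : C -> R) (env : W -> R) (sb : V -> mexpr W C) e :
  meval c env (mmap sb e) = meval c (fun v => meval c env (sb v)) e.
Proof. by elim: e => [v|a|p IHp q IHq|p IHp q IHq] //=; rewrite IHp IHq. Qed.

Definition sub kappa (v : JV) : mexpr 'I_kappa C :=
  if v.1 == 0 then MCst (if v.2 == 0%N then 1 else 0)
  else oapp MVar (MCst 0) (insub v.2 : option 'I_kappa).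

Lemma meval_sub kappa (R : comNzRingType) (c : C -> R) (env : 'I_kappa -> R) v :
  meval c env (sub kappa v) =
  if v.1 == 0 then c (if v.2 == 0%N then 1 else 0) else oapp env (c 0) (insub v.2 : option 'I_kappa).
Proof. by rewrite /sub; case: (v.1 == 0) => //; case: insubP. Qed.

Definition Qof kappa (P : mexpr JV C) : mexpr 'I_kappa C := mmap (sub kappa) P.

Lemma aw_eq kappa (j : 'I_kappa) : arg_weight j = (2 * j + 1)%N.
Proof. by rewrite /arg_weight; case: eqP => // ->. Qed.

Lemma jet_comp_scale (p : {poly C}) (c : C) n :
  ((p \Po (c *: 'X))^`(n)).[0] = c ^+ n * (p^`(n)).[0].
Proof. by rewrite !jet0 coef_comp_scale mulrA. Qed.

Lemma jetX k : (('X : {poly C})^`(k.+1)).[0] = if k == 0%N then 1 else 0.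
Proof. by rewrite jet0 coefX; case: k => [|k] /=; rewrite ?mul1r ?mul0r // mul1r. Qed.

Lemma homog_scalar kappa m (P : mexpr JV C) (c : C) (w : nat -> C) :
  jet_order_le kappa P -> sinv m (M P) -> c != 0 ->
  meval id (fun v : JV => if v.1 == 0 then (if v.2 == 0%N then c else 0) else c ^+ v.2.+1 * w v.2) P
  = c ^+ m * meval id (fun v : JV => if v.1 == 0 then (if v.2 == 0%N then 1 else 0) else w v.2) P.
Proof.
move=> HP Hinv Hc.
set f := gnorm ('X * rpoly kappa w).
have dphi : (c *: ('X : {poly C}))^`() = c%:P by rewrite derivZ derivX alg_polyC.
have := Hinv f (c *: 'X); rewrite dphi polyC_eq0 => /(_ Hc) /(congr1 (horner^~ 0)).
rewrite hornerM horner_exp hornerC horner_comp hornerZ hornerX mulr0 /M !meval_horner => E.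
rewrite -(meval_ext id HP (env1 := fun v => (jet_env (fun i => f i \Po c *: 'X) v).[0])).
  rewrite E; congr (_ * _); apply: (meval_ext id HP) => -[i k] /= Hk.
  rewrite /jet_env /f /gnorm /=; case: ifP => _.
    by rewrite -derivnS jetX.
  by rewrite -derivnS (jet_of_coef (a := w k)) // coef_Xrpoly.
move=> -[i k] /= Hk; rewrite /jet_env /f /gnorm /=.
case: ifP => _; rewrite -derivnS jet_comp_scale.
  by rewrite jetX; case: k Hk => [|k] _ /=; rewrite ?mulr1 ?mulr0 ?expr1.
by congr (_ * _); apply: jet_of_coef; exact: coef_Xrpoly.
Qed.

Definition ext kappa (zz : 'I_kappa -> C) (k : nat) : C := oapp zz 0 (insub k : option 'I_kappa).

Lemma F_horner kappa (zz : 'I_kappa -> C) (P : mexpr JV C) t :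
  (meval (@polyC C) (wenv (@arg_weight kappa) zz) (Qof kappa P)).[t] =
  meval id (fun v : JV => if v.1 == 0 then (if v.2 == 0%N then 1 else 0)
                          else ext zz v.2 * t ^+ (2 * v.2 + 1)) P.
Proof.
rewrite meval_horner /Qof meval_mmap; apply: meval_eq => v.
rewrite meval_sub /ext; case: (v.1 == 0) => //.
case: insubP => [j _ <-|_] /=; last by rewrite mul0r.
by rewrite /wenv hornerZ hornerXn aw_eq.
Qed.

Definition Wenv kappa (zz : 'I_kappa -> C) (v : JV) : {poly C} :=
  if v.1 == 0 then (if v.2 == 0%N then 'X^(2 * kappa - 1) else 0)
  else ext zz v.2 *: 'X^(kappa - v.2.+1).

Lemma vanish kappa m (P : mexpr JV C) (zz : 'I_kappa -> C) d :
  (0 < kappa)%N -> jet_order_le kappa P -> sinv m (M P) ->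
  ((2 * kappa - 1) * m < kappa * d)%N ->
  (meval (@polyC C) (wenv (@arg_weight kappa) zz) (Qof kappa P))`_d = 0.
Proof.
move=> Kp HP Hinv Hd.
set F := meval _ _ (Qof kappa P).
have [Hs|Hs] := leqP (size F) d; first by rewrite nth_default.
set s := size F.
set W := meval (@polyC C) (Wenv zz) P.
set E := ((2 * kappa - 1) * m)%N.
set R := \sum_(d0 < s) F`_d0 *: ('X^(kappa * (s - d0)) : {poly C}).
have HW : forall sg : C, sg != 0 -> W.[sg] = sg ^+ E * F.[sg^-1 ^+ kappa].
  move=> sg Hsg; rewrite F_horner /W meval_horner.
  rewrite /E exprM.
  apply: eq_trans _ (@homog_scalar kappa m P (sg ^+ (2 * kappa - 1))
    (fun k => ext zz k * sg^-1 ^+ kappa ^+ (2 * k + 1)) HP Hinv _); last by rewrite expf_neq0.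
  apply: (meval_ext id HP) => -[i k] /= Hk; rewrite /Wenv /=.
  case: (i == 0); first by case: (k == 0%N); rewrite ?hornerXn ?horner0.
  rewrite hornerZ hornerXn mulrCA; congr (_ * _).
  rewrite -!exprM.
  have -> : ((2 * kappa - 1) * k.+1 = kappa * (2 * k + 1) + (kappa - k.+1))%N.
    move/ssrnat.ltP: Hk => Hk; rewrite -?(plusE, multE, minusE); lia.
  by rewrite exprD mulrAC exprVn mulfV ?expf_neq0 // mul1r.
have Hpoly : 'X^(kappa * s) * W = 'X^E * R.
  apply/eqP; rewrite -subr_eq0; apply/eqP.
  apply: (poly_eq0_off (q := 'X)); first by rewrite polyX_eq0.
  move=> sg; rewrite hornerX => Hsg.
  rewrite hornerD hornerN !hornerM !hornerXn HW // (horner_coef F) /R horner_sum.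
  rewrite mulrCA mulr_sumr -mulrBr -sumrB big1 ?mulr0 // => i _.
  rewrite hornerZ hornerXn -exprM mulrCA; apply/eqP; rewrite subr_eq0; apply/eqP.
  congr (_ * _).
  have Hi : (i <= s)%N by apply: ltnW.
  rewrite -{1}(subnK Hi) mulnDr exprD -mulrA exprVn.
  by rewrite mulfV ?expf_neq0 // mulr1.
have := congr1 (fun p : {poly C} => p`_(kappa * (s - d) + E)) Hpoly.
rewrite /= !coefXnM.
have -> : (kappa * (s - d) + E < kappa * s)%N.
  move: Hd Hs; rewrite /E => /ssrnat.ltP Hd /ssrnat.ltP Hs; apply/ssrnat.ltP.
  rewrite -?(plusE, multE, minusE) in Hd Hs *; nia.
rewrite ltnNge leq_addl /= addnK /R coef_sum => /esym.
rewrite (bigD1 (Ordinal Hs)) //= big1 ?addr0.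
  by rewrite coefZ coefXn eqxx mulr1.
move=> i Hi; rewrite coefZ coefXn; case: eqP => [e|_]; last by rewrite mulr0.
exfalso; move/negP: Hi; apply; apply/eqP/val_inj => /=.
have e' : (s - i = s - d)%N.
  by apply/eqP; rewrite -(eqn_pmul2l Kp); apply/eqP.
have Hi' := ltn_ord i.
move/ssrnat.ltP: Hs => Hs'; move/ssrnat.ltP: Hi' => Hi''.
rewrite -?minusE in e'; lia.
Qed.

Lemma arange_sum kappa m (u : C) (G : nat -> C) : (2 <= kappa)%N -> u != 0 ->
  \sum_(a <- a_range kappa m) u ^ a * G `|m%:Z - a|%N =
  \sum_(d < (kappa * m).+1 | (kappa * d <= (2 * kappa - 1) * m)%N) u ^+ m * u^-1 ^+ d * G d.
Proof.
move=> K2 Hu.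
have hK : (kappa * m = m + kappa.-1 * m)%N by case: kappa K2 => [|k] //= _; rewrite mulSn.
rewrite /a_range big_filter big_map.
have -> : iota 0 (kappa * m).+1 = index_iota 0 (kappa * m).+1 by rewrite /index_iota subn0.
rewrite big_rev_mkord subn0.
apply: eq_big => [d|d Hd].
  have Hd : (d <= kappa * m)%N by rewrite -ltnS.
  rewrite subSS -(subzn Hd).
  have -> : ((kappa * m)%N%:Z = m%:Z + (kappa.-1 * m)%N%:Z).
    by rewrite -PoszD -hK.
  rewrite addrAC addrK gerBl andbT mulrBr lerNl opprB lerBlDr -!PoszM -PoszD lez_nat.
  rewrite -mulnDl; congr (_ <= _ * _)%N.
  by case: kappa K2 {hK d Hd} => [|k] //= _; rewrite mul2n -addnn addSn subn1 /= addnC.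
have Hd' : (d <= kappa * m)%N by rewrite -ltnS.
rewrite subSS -(subzn Hd').
have -> : ((kappa * m)%N%:Z = m%:Z + (kappa.-1 * m)%N%:Z) by rewrite -PoszD -hK.
rewrite addrAC addrK subKr absz_nat expfzDr // -exprz_inv.
by [].
Qed.

Lemma forward kappa m (P : mexpr JV C) : (2 <= kappa)%N -> DS kappa m P ->
     exists Pa : int -> mexpr 'I_kappa C,
       (forall a, a \in a_range kappa m ->
          weighted_homog (arg_weight (kappa:=kappa)) (m%:Z - a) (Pa a)) /\
       (forall x : JV -> C, meval id x (f1' C) != 0 ->
          meval id x P = lam_sum m Pa x).
Proof.
move=> K2 [HP Hinv']; have Hinv := invr_var Hinv'.
have K0 : (0 < kappa)%N by apply: leq_trans K2.
set Q := Qof kappa P.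
exists (fun a => hom (@arg_weight kappa) Q `|m%:Z - a|%N); split.
  move=> a Ha t y; move: Ha; rewrite mem_filter => /andP[/andP[_ Ham] _].
  have Hge : 0 <= m%:Z - a by rewrite subr_ge0.
  rewrite homog_hom -[X in t ^ X](gez0_abs Hge).
  by [].
move=> x Hx; set u := x (0, 0%N).
have Hu : u != 0 by [].
have [g2 [phi [p0 d0 dn0 Hj]]] := normalize K0 Hx.
set y := fun v => (jet_env (gnorm g2) v).[0].
set z : 'I_kappa -> C := fun j => y (1, val j).
have E1 : meval id x P = u ^+ m * meval id y P := eval_norm p0 d0 dn0 Hj HP Hinv.
have E2 : meval id y P = meval id z Q.
  rewrite /Q /Qof meval_mmap; apply: (meval_ext id HP) => -[i k] /= Hk.
  rewrite meval_sub /=; case: ifP => Hi.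
    by rewrite /y /jet_env /gnorm /= Hi -derivnS jetX.
  rewrite insubT /= /z /y; congr (_.[0]); rewrite /jet_env /=.
  by rewrite (ord2_neq0 (negbT Hi)).
have E3 : forall j : 'I_kappa, arg_env x j = u ^+ arg_weight j * z j.
  move=> j; rewrite /arg_env; case: eqP => Hj0.
    have Hw : arg_weight j = 1%N by rewrite aw_eq Hj0.
    rewrite Hw (eval_norm p0 d0 dn0 Hj _ (sinv_var 1)) //=.
    by rewrite /z /y /= Hj0.
  have Hjp : (0 < j)%N by rewrite lt0n; apply/eqP.
  have Hw : arg_weight j = (2 * j.-1 + 3)%N.
    rewrite aw_eq; move: Hjp; case: (nat_of_ord j) => [|k] //= _.
    rewrite -?(plusE, multE); lia.
  rewrite Hw (eval_norm p0 d0 dn0 Hj _ (sinv_Lam _)); last first.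
    by apply: jet_order_mono (Lam_order _); rewrite prednK.
  congr (_ * _); rewrite -meval_horner -/(M _ _) M_Lam_norm // (prednK Hjp).
  by [].
have E4 : forall j : 'I_kappa, z j = u^-1 ^+ arg_weight j * arg_env x j.
  by move=> j; rewrite E3 mulrA -exprMn mulVf // expr1n mul1r.
set N := maxn (size (meval (@polyC C) (wenv (@arg_weight kappa) z) Q)) (kappa * m).+1.
rewrite E1 E2 (@sum_hom _ (@arg_weight kappa) z Q N) ?leq_maxl //.
have := @arange_sum kappa m u (fun d => meval id (@arg_env C kappa x) (hom (@arg_weight kappa) Q d)) K2 Hu.
rewrite /= => HH; rewrite /lam_sum HH; clear HH.
rewrite mulr_sumr (bigID (fun d : 'I_N => (kappa * d <= (2 * kappa - 1) * m)%N)) /=.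
rewrite [X in _ + X]big1 ?addr0; last first.
  move=> d; rewrite -ltnNge => Hd.
  by rewrite -coef_hom (@vanish kappa m P z d K0 HP Hinv Hd) mulr0.
rewrite (@big_ord_widen_cond _ _ _ (kappa * m).+1 N (fun d => (kappa * d <= (2 * kappa - 1) * m)%N)
  (fun d => u ^+ m * u^-1 ^+ d * meval id (@arg_env C kappa x) (hom (@arg_weight kappa) Q d)) (leq_maxr _ _)).
apply: eq_big => [d|d Hd].
  case Hc: (kappa * d <= (2 * kappa - 1) * m)%N => //=.
  symmetry; rewrite ltnS.
  move/ssrnat.leP: Hc => Hc; move/ssrnat.leP: K2 => K2'; apply/ssrnat.leP.
  rewrite -?(plusE, multE, minusE) in Hc K2' *; nia.
rewrite (meval_eq _ _ E4) homog_hom.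
by rewrite mulrA.
Qed.

Definition argE kappa (j : 'I_kappa) : mexpr JV C :=
  if (j : nat) == 0%N then f2' C else Lam C j.-1.

Lemma arg_envE kappa (x : JV -> C) (j : 'I_kappa) : arg_env x j = meval id x (argE j).
Proof. by rewrite /arg_env /argE; case: eqP. Qed.

Lemma sinv_argE kappa (j : 'I_kappa) : sinv (arg_weight j) (M (argE j)).
Proof.
rewrite /argE aw_eq; case: eqP => [->|Hj0]; first exact: sinv_var.
have Hjp : (0 < j)%N by rewrite lt0n; apply/eqP.
have -> : (2 * j + 1 = 2 * j.-1 + 3)%N.
  move: Hjp; case: (nat_of_ord j) => [|k] //= _; rewrite -?(plusE, multE); lia.
exact: sinv_Lam.
Qed.

Lemma sinv_eval w e f phi t0 : sinv w (M e) -> phi^`() != 0 ->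
  meval id (fun v => (jet_env (fun i => f i \Po phi) v).[t0]) e =
  (phi^`()).[t0] ^+ w * meval id (fun v => (jet_env_comp f phi v).[t0]) e.
Proof.
move=> H Hphi; rewrite -!meval_horner -/(M e _) (H f phi Hphi).
by rewrite hornerM horner_exp M_comp.
Qed.

Lemma stepA kappa m (Pa : int -> mexpr 'I_kappa C) (P : mexpr JV C) f phi t0 :
  (forall a, a \in a_range kappa m ->
     weighted_homog (arg_weight (kappa:=kappa)) (m%:Z - a) (Pa a)) ->
  (forall x : JV -> C, meval id x (f1' C) != 0 -> meval id x P = lam_sum m Pa x) ->
  phi^`() != 0 ->
  ((f 0)^`() \Po phi).[t0] != 0 -> (phi^`()).[t0] != 0 ->
  (M P (fun i => f i \Po phi)).[t0] = (phi^`() ^+ m * (M P f \Po phi)).[t0].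
Proof.
move=> Hhom Hrep Hphi Hy Hb.
set b := (phi^`()).[t0].
set X := fun v => (jet_env (fun i => f i \Po phi) v).[t0].
set Y := fun v => (jet_env_comp f phi v).[t0].
rewrite hornerM horner_exp M_comp !meval_horner -/b -/X -/Y.
have hX1 : meval id X (f1' C) = meval id Y (f1' C) * b.
  by rewrite (sinv_eval _ _ (sinv_var 0) Hphi) expr1 mulrC.
have hY1 : meval id Y (f1' C) != 0 by [].
rewrite Hrep ?hX1 ?mulf_neq0 // Hrep //.
rewrite /lam_sum mulr_sumr; apply: eq_big_seq => a Ha.
have Harg : forall j : 'I_kappa, arg_env X j = b ^+ arg_weight j * arg_env Y j.
  by move=> j; rewrite !arg_envE (sinv_eval _ _ (sinv_argE j) Hphi).
rewrite (meval_eq _ _ Harg) Hhom // hX1 expfzMl.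
rewrite -mulrA [b ^ a * _]mulrA -expfzDr // addrC subrK mulrCA.
by [].
Qed.

Lemma stepB kappa m (Pa : int -> mexpr 'I_kappa C) (P : mexpr JV C) f phi :
  (forall a, a \in a_range kappa m ->
     weighted_homog (arg_weight (kappa:=kappa)) (m%:Z - a) (Pa a)) ->
  (forall x : JV -> C, meval id x (f1' C) != 0 -> meval id x P = lam_sum m Pa x) ->
  phi^`() != 0 -> (f 0)^`() \Po phi != 0 ->
  M P (fun i => f i \Po phi) = phi^`() ^+ m * (M P f \Po phi).
Proof.
move=> Hhom Hrep Hphi Hf.
apply/eqP; rewrite -subr_eq0; apply/eqP.
apply: (poly_eq0_off (q := ((f 0)^`() \Po phi) * phi^`())); first by rewrite mulf_neq0.
move=> t; rewrite hornerM mulf_eq0 negb_or => /andP[h1 h2].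
by rewrite hornerD hornerN (stepA Hhom Hrep) // subrr.
Qed.

Lemma backward kappa m (Pa : int -> mexpr 'I_kappa C) (P : mexpr JV C) :
  (forall a, a \in a_range kappa m ->
     weighted_homog (arg_weight (kappa:=kappa)) (m%:Z - a) (Pa a)) ->
  jet_order_le kappa P ->
  (forall x : JV -> C, meval id x (f1' C) != 0 -> meval id x P = lam_sum m Pa x) ->
  DS kappa m P.
Proof.
move=> Hhom HP Hrep; split => // f phi Hphi.
rewrite -M_comp -/(M P _) -/(M P f).
apply/eqP; rewrite -subr_eq0; apply/eqP; apply: poly_eq0_all => t0.
set fc := fun (c : C) (i : 'I_2) => if i == 0 then f i + c *: 'X else f i.
set EL := fun v : JV => ((jet_env (fun i => f i \Po phi) v).[t0])%:P +
   (if v.1 == 0 then ((phi^`(v.2.+1)).[t0]) *: 'X else 0).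
set ER := fun v : JV => ((jet_env_comp f phi v).[t0])%:P +
   (if v.1 == 0 then ((('X : {poly C})^`(v.2.+1) \Po phi).[t0]) *: 'X else 0).
set A := meval (@polyC C) EL P - (((phi^`()).[t0]) ^+ m)%:P * meval (@polyC C) ER P.
have hA : forall c, A.[c] = (M P (fun i => fc c i \Po phi)).[t0] - (phi^`() ^+ m * (M P (fc c) \Po phi)).[t0].
  move=> c; rewrite hornerD hornerN hornerM hornerC !meval_horner.
  rewrite /M hornerM horner_exp meval_comp meval_horner.
  congr (_ - _ * _); apply: meval_eq => -[i k]; rewrite /EL /ER /fc /jet_env /=;
    case: ifP => _; rewrite ?horner0 ?addr0 ?hornerD ?hornerC ?hornerZ ?hornerX //.
    by rewrite comp_polyD comp_polyZ comp_polyX derivnD derivnZ derivD derivZ hornerD hornerZ mulrC.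
  by rewrite /jet_env_comp /= derivnD derivnZ derivD derivZ comp_polyD comp_polyZ hornerD hornerZ mulrC.
have A0 : A = 0.
  apply: (poly_eq0_off (q := 'X + ((((f 0)^`() \Po phi))`_0)%:P)).
    by rewrite -size_poly_eq0 size_XaddC.
  move=> c Hc; rewrite hA (stepB Hhom Hrep Hphi) ?subrr //.
  apply: contraNneq Hc => e.
  have : ((fc c 0)^`() \Po phi)`_0 = 0 by rewrite e coef0.
  rewrite /fc eqxx derivD derivZ derivX comp_polyD comp_polyZ comp_polyC coefD coefZ coefC /=.
  by rewrite hornerD hornerX hornerC mulr1 addrC => ->.
have := congr1 (horner^~ 0) A0; rewrite horner0 /= => <-.
symmetry; rewrite /A hornerD hornerN hornerM hornerC !meval_horner.
rewrite hornerD hornerN /M hornerM horner_exp meval_comp !meval_horner.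
congr (_ - _ * _); apply: meval_eq => -[i k]; rewrite /EL /ER /=.
  by case: ifP => _; rewrite ?addr0 ?hornerD ?hornerC ?hornerZ ?hornerX ?mulr0 ?addr0.
by case: ifP => _; rewrite ?addr0 ?hornerD ?hornerC ?hornerZ ?hornerX ?mulr0 ?addr0.
Qed.

End S.

Unset Implicit Arguments.

Theorem mainTheorem8 (C : numClosedFieldType) (kappa m : nat) :
  (2 <= kappa)%N ->
  (forall P : mexpr JV C, DS kappa m P ->
     exists Pa : int -> mexpr 'I_kappa C,
       (forall a, a \in a_range kappa m ->
          weighted_homog (arg_weight (kappa:=kappa)) (m%:Z - a) (Pa a)) /\
       (forall x : JV -> C, meval id x (f1' C) != 0 ->
          meval id x P = lam_sum m Pa x))
  /\
  (forall (Pa : int -> mexpr 'I_kappa C) (P : mexpr JV C),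
     (forall a, a \in a_range kappa m ->
        weighted_homog (arg_weight (kappa:=kappa)) (m%:Z - a) (Pa a)) ->
     jet_order_le kappa P ->
     (forall x : JV -> C, meval id x (f1' C) != 0 ->
        meval id x P = lam_sum m Pa x) ->
     DS kappa m P).
Proof.
move=> K2; split.
  by move=> P HP; apply: forward.
by move=> Pa P Hh HP Hr; apply: backward Hh HP Hr.
Qed.
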